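(* Let $(S_n)_{n\ge0}$ be defined by $S_0=3$, $S_1=1$, $S_2=3$ and $S_{n+1}=S_n+S_{n-1}+S_{n-2}$ for $n\ge 2$. Let $\alpha,\beta,\gamma$ be the roots of $x^3-x^2-x-1=0$ and $C_n=\alpha^n\beta^n+\alpha^n\gamma^n+\beta^n\gamma^n$ for $n\ge0$. Then for all integers $n\ge 0$ and $m\ge 2$, $$S_nS_{nm}=S_{n(m+1)}+S_{n(m-1)}C_n-S_{n(m-2)}.$$
   Context: $S_n$ is the generalized Lucas (generalized Tribonacci) sequence. *)

(* Defs.v *)
From mathcomp Require Import all_boot all_order all_algebra all_field.
Set Implicit Arguments. Unset Strict Implicit. Unset Printing Implicit Defensive.
Import Order.TTheory GRing.Theory Num.Theory.

Fixpoint Sseq (n : nat) : nat :=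
  match n with
  | 0 => 3
  | 1 => 1
  | 2 => 3
  | S ((S (S k as k1)) as k2) => Sseq k2 + Sseq k1 + Sseq k
  end.

Local Open Scope ring_scope.

Definition Cseq (a b c : algC) (n : nat) : algC :=
  a ^+ n * b ^+ n + a ^+ n * c ^+ n + b ^+ n * c ^+ n.
Example Sseq_check : [:: Sseq 0; Sseq 1; Sseq 2; Sseq 3; Sseq 4; Sseq 5] = [:: 3; 1; 3; 7; 11; 21]%N.
Proof. reflexivity. Qed.

(* Main.v *)
Require Import Defs.
From mathcomp Require Import all_boot all_order all_algebra all_field.
From mathcomp Require Import ring.
Import GRing.Theory.
Local Open Scope ring_scope.

Lemma coefs (a b c : algC) :
  ('X^3 - 'X^2 - 'X - 1 : {poly algC}) = ('X - a%:P) * ('X - b%:P) * ('X - c%:P) ->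
  [/\ a + b + c = 1, a*b + a*c + b*c = -1 & a*b*c = 1].
Proof.
move=> H.
have E : ('X - a%:P) * ('X - b%:P) * ('X - c%:P) =
  'X^3 - (a+b+c)%:P * 'X^2 + (a*b+a*c+b*c)%:P * 'X - (a*b*c)%:P :> {poly algC}.
  rewrite !rmorphD !rmorphM /=. ring.
rewrite E in H.
have h0 := congr1 (fun p : {poly algC} => p`_0) H.
have h1 := congr1 (fun p : {poly algC} => p`_1) H.
have h2 := congr1 (fun p : {poly algC} => p`_2) H.
move: h0 h1 h2; rewrite /= !coefE /=.
rewrite !(mulr0, mulr1, subr0, sub0r, add0r, addr0, oppr0) => h0 h1 h2.
by split; [apply: oppr_inj; rewrite -h2 | rewrite h1 | apply: oppr_inj; rewrite -h0].
Qed.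

Lemma Spow (a b c : algC) :
  ('X^3 - 'X^2 - 'X - 1 : {poly algC}) = ('X - a%:P) * ('X - b%:P) * ('X - c%:P) ->
  forall k, (Sseq k)%:R = a ^+ k + b ^+ k + c ^+ k :> algC.
Proof.
move=> H; case: (coefs a b c H) => e1 e2 e3.
have cub : forall x, x = a \/ x = b \/ x = c -> x ^+ 3 = x ^+ 2 + x + 1.
  move=> x hx.
  have : ('X^3 - 'X^2 - 'X - 1 : {poly algC}).[x] = 0.
    rewrite H !hornerE; case: hx => [->|[->|->]]; rewrite subrr; ring.
  rewrite !hornerE => h.
  have h2 : x ^+ 3 - (x ^+ 2 + x + 1) = 0 by rewrite -h; ring.
  by move/eqP: h2; rewrite subr_eq0 => /eqP.
have step : forall k, a ^+ k.+3 + b ^+ k.+3 + c ^+ k.+3 =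
   (a ^+ k.+2 + b ^+ k.+2 + c ^+ k.+2) + (a ^+ k.+1 + b ^+ k.+1 + c ^+ k.+1)
   + (a ^+ k + b ^+ k + c ^+ k).
  move=> k.
  have := cub a (or_introl erefl).
  have := cub b (or_intror (or_introl erefl)).
  have := cub c (or_intror (or_intror erefl)).
  move=> hc hb ha.
  rewrite !(exprS _ k.+2) !(exprS _ k.+1) !(exprS _ k).
  have -> : a * (a * (a * a ^+ k)) = a ^+ 3 * a ^+ k by ring.
  have -> : b * (b * (b * b ^+ k)) = b ^+ 3 * b ^+ k by ring.
  have -> : c * (c * (c * c ^+ k)) = c ^+ 3 * c ^+ k by ring.
  rewrite ha hb hc; ring.
elim/ltn_ind => k IH.
case: k IH => [|[|[|k]]] IH.
- rewrite !expr0 /=; ring.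
- by rewrite !expr1 e1.
- have -> : a ^+ 2 + b ^+ 2 + c ^+ 2 = (a+b+c)^+2 - 2 * (a*b+a*c+b*c) by ring.
  rewrite e1 e2 /=; ring.
- have -> : Sseq k.+3 = (Sseq k.+2 + Sseq k.+1 + Sseq k)%N by [].
  rewrite step !natrD !IH //. by apply/leqW/leqW.
Qed.

Lemma keyid (x y z : algC) j : x * y * z = 1 ->
  (x + y + z) * (x ^+ j.+2 + y ^+ j.+2 + z ^+ j.+2) =
  (x ^+ j.+3 + y ^+ j.+3 + z ^+ j.+3) + (x ^+ j.+1 + y ^+ j.+1 + z ^+ j.+1) * (x * y + x * z + y * z)
  - (x ^+ j + y ^+ j + z ^+ j).
Proof.
move=> h.
have -> : (x + y + z) * (x ^+ j.+2 + y ^+ j.+2 + z ^+ j.+2) =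
  (x ^+ j.+3 + y ^+ j.+3 + z ^+ j.+3) + (x ^+ j.+1 + y ^+ j.+1 + z ^+ j.+1) * (x * y + x * z + y * z)
  - (x * y * z) * (x ^+ j + y ^+ j + z ^+ j).
  rewrite !exprS; ring.
by rewrite h mul1r.
Qed.

Theorem mainTheorem6 (a b c : algC) :
  ('X^3 - 'X^2 - 'X - 1 : {poly algC}) = ('X - a%:P) * ('X - b%:P) * ('X - c%:P) ->
  forall n m : nat, (2 <= m)%N ->
    (Sseq n)%:R * (Sseq (n * m))%:R =
      (Sseq (n * (m + 1)))%:R + (Sseq (n * (m - 1)))%:R * Cseq a b c n
      - (Sseq (n * (m - 2)))%:R :> algC.
Proof.
move=> H n m hm.
case: (coefs a b c H) => _ _ e3.
case: m hm => [|[|j]] // _.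
have -> : (j.+2 + 1 = j.+3)%N by rewrite addn1.
have -> : (j.+2 - 1 = j.+1)%N by rewrite subn1.
have -> : (j.+2 - 2 = j)%N by rewrite subSS subn1.
rewrite !(Spow a b c H) /Cseq !exprM.
have hx : a ^+ n * b ^+ n * c ^+ n = 1 by rewrite -!exprMn e3 expr1n.
by rewrite -keyid // -!exprM.
Qed.
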